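(* Let $W$ be a finite group and $V$ a finite-dimensional irreducible linear representation of $W$ over $\mathbb{R}$ or $\mathbb{C}$. Suppose there exist $v\in V\setminus\{0\}$ and $v'\in Wv$ such that $Wv\setminus\{v,v'\}$ does not span $V$. Then $|Wv|\le 2\dim(V)$.
   Context: $Wv$ denotes the orbit of $v$ under $W$. *)

(* Defs.v *)
From HB Require Import structures.
From mathcomp Require Import all_boot all_algebra all_fingroup.
From mathcomp Require Import mxrepresentation.
From Stdlib Require Import Reals.
From mathcomp Require Import Rstruct complex.
Set Implicit Arguments. Unset Strict Implicit. Unset Printing Implicit Defensive.
Import GRing.Theory.
Local Open Scope ring_scope.

Section Defs.
Variables (F : fieldType) (gT : finGroupType) (G : {group gT}) (n : nat).

Definition rorbit (rG : mx_representation F G n) (v : 'rV[F]_n) : seq 'rV[F]_n :=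
  undup [seq v *m rG g | g <- enum G].

Definition spans_all (s : seq 'rV[F]_n) : bool :=
  row_full (\matrix_(i < size s) nth 0 s i).
End Defs.

(* Main.v *)
Require Import Defs.
From HB Require Import structures.
From mathcomp Require Import all_boot all_algebra all_fingroup.
From mathcomp Require Import mxrepresentation.
From Stdlib Require Import Reals.
From mathcomp Require Import Rstruct complex.
Import GRing.Theory.
Local Open Scope ring_scope.
Set Implicit Arguments. Unset Strict Implicit. Unset Printing Implicit Defensive.

Section Gen.
Variables (F : fieldType) (gT : finGroupType) (W : {group gT}) (n : nat)
  (rG : mx_representation F W n).

Lemma mem_rorbit v w : w \in rorbit rG v -> exists2 g, g \in W & w = v *m rG g.
Proof.
rewrite mem_undup => /mapP [g]; rewrite mem_enum => Wg ->; by exists g.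
Qed.

Lemma rorbit_mem v g : g \in W -> v *m rG g \in rorbit rG v.
Proof. by move=> Wg; rewrite mem_undup; apply/mapP; exists g; rewrite ?mem_enum. Qed.

Definition ev (j : 'I_#|W|) : gT := enum_val j.
Lemma evP j : ev j \in W. Proof. exact: enum_valP. Qed.
Variable c : 'cV[F]_n.
Definition Bt : 'M[F]_(#|W|, n) :=
  \matrix_(j < #|W|, i < n) (rG (ev j) *m c) i 0.

Lemma BtE p (Y : 'M[F]_(p, n)) a j :
  (Y *m Bt^T) a j = (Y *m rG (ev j) *m c) a 0.
Proof.
rewrite -mulmxA !mxE; apply: eq_bigr => i _; by rewrite !mxE.
Qed.

Lemma BtsubE q (f : 'I_q -> 'I_#|W|) p (Y : 'M[F]_(p, n)) a k :
  (Y *m (rowsub f Bt)^T) a k = (Y *m rG (ev (f k)) *m c) a 0.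
Proof.
rewrite -mulmxA !mxE; apply: eq_bigr => i _; by rewrite !mxE.
Qed.

Lemma Bt0 p (Y : 'M[F]_(p, n)) :
  (Y *m Bt^T == 0) = [forall j, Y *m rG (ev j) *m c == 0].
Proof.
apply/eqP/forallP => [H j|H].
  apply/eqP/matrixP => a b; rewrite ord1 -BtE H !mxE //.
apply/matrixP => a j; rewrite BtE (eqP (H j)) !mxE //.
Qed.

Hypothesis irr : mx_irreducible rG.
Hypothesis c0 : c != 0.

Lemma Bt_full : row_full Bt.
Proof.
case/mx_irrP: irr => _ irrU.
have K0 : kermx Bt^T == 0.
  apply/negPn/negP => nz.
  have modK : mxmodule rG (kermx Bt^T).
    apply/mxmoduleP => x Wx; rewrite sub_kermx Bt0; apply/forallP => j.
    rewrite -(mulmxA _ (rG x)) -repr_mxM ?evP //.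
    have := mulmx_ker Bt^T; move/eqP; rewrite Bt0 => /forallP.
    move/(_ (enum_rank_in (groupM Wx (evP j)) (x * enum_val j)%g)).
    by rewrite /ev enum_rankK_in ?groupM ?evP // mulmxA.
  have := irrU _ modK nz; rewrite -sub1mx sub_kermx Bt0 => /forallP.
  move/(_ (enum_rank_in (group1 W) 1%g)); rewrite /ev enum_rankK_in ?group1 //.
  by rewrite repr_mx1 mul1mx mul1mx (negPf c0).
by rewrite kermx_eq0 /row_free mxrank_tr in K0.
Qed.

Lemma main (v v' : 'rV[F]_n) : v != 0 ->
  (forall w, w \in rorbit rG v -> w \notin [:: v; v'] -> w *m c = 0) ->
  leq (size (rorbit rG v)) (muln 2 n).
Proof.
move=> v0 Hc.
pose f := fullrankfun Bt_full.
pose C := rowsub f Bt.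
have uC : C^T \in unitmx by rewrite unitmx_tr fullrowsub_unit.
pose g k := ev (f k).
pose S := [seq v *m rG (g k)^-1%g | k <- enum 'I_n] ++
          [seq v' *m rG (g k)^-1%g | k <- enum 'I_n].
have -> : muln 2 n = size S by rewrite size_cat !size_map -enumT size_enum_ord mul2n addnn.
apply: uniq_leq_size; first exact: undup_uniq.
move=> w Ow; have [h Wh ->] := mem_rorbit Ow.
have wnz : v *m rG h != 0.
  apply: contraNneq v0 => e; by rewrite -(repr_mxK rG Wh v) e mul0mx.
have [k Hk] : exists k, v *m rG h *m rG (g k) *m c != 0.
  apply/existsP; apply: contraNT wnz => /existsPn H.
  have e : v *m rG h *m C^T = 0.
    apply/matrixP => a b; rewrite BtsubE ord1; move: (H b) => /negPn/eqP ->.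
    by rewrite !mxE.
  by rewrite -(mulmxK uC (v *m rG h)) e mul0mx.
have Wg : g k \in W by apply: evP.
have O2 : v *m rG h *m rG (g k) \in rorbit rG v.
  by rewrite -mulmxA -repr_mxM // rorbit_mem // groupM.
have : v *m rG h *m rG (g k) \in [:: v; v'].
  by apply: contraNT Hk => nin; rewrite Hc.
rewrite !inE mem_cat => /orP [] /eqP e; apply/orP; [left|right];
  apply/mapP; exists k; rewrite ?mem_enum // -[in RHS]e repr_mxK.
all: by [].
Qed.
End Gen.

Lemma final (F : fieldType) (gT : finGroupType) (W : {group gT}) (n : nat)
  (rG : mx_representation F W n) : mx_irreducible rG ->
  forall v : 'rV[F]_n, v != 0 -> forall v' : 'rV[F]_n,
  ~~ spans_all [seq w <- rorbit rG v | w \notin [:: v; v']] ->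
  leq (size (rorbit rG v)) (muln 2 n).
Proof.
move=> irr v v0 v' nsp.
set L := [seq w <- rorbit rG v | w \notin [:: v; v']] in nsp.
set M := \matrix_(i < size L) nth 0 L i in nsp.
have nzK : cokermx M != 0 by rewrite cokermx_eq0.
have [j cj] : exists j, col j (cokermx M) != 0.
  apply/existsP; apply: contraNT nzK => /existsPn H; apply/eqP/matrixP => a b.
  by move/negPn/eqP/matrixP: (H b) => /(_ a 0); rewrite !mxE.
apply: (main irr cj v0 (v' := v')) => w Ow nin.
have wL : w \in L by rewrite mem_filter nin Ow.
have iL : leq (index w L).+1 (size L) by rewrite index_mem.
have -> : w = row (Ordinal iL) M by rewrite rowK /= nth_index.
apply/matrixP => a b; rewrite !ord1.
have := mulmx_coker M => /matrixP /(_ (Ordinal iL) j).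
rewrite [RHS]mxE [X in X = _]mxE => H.
rewrite [RHS]mxE -H mxE; apply: eq_bigr => i _; rewrite !mxE //.
Qed.
Unset Implicit Arguments.
Theorem lemma4p4 :
  (forall (gT : finGroupType) (W : {group gT}) (n : nat)
          (rG : mx_representation R W n),
     mx_irreducible rG ->
     (forall v : 'rV[R]_n, v != 0 ->
        forall v' : 'rV[R]_n, v' \in rorbit rG v ->
          ~~ spans_all [seq w <- rorbit rG v | w \notin [:: v; v']] ->
          leq (size (rorbit rG v)) (muln 2 n)))
  /\
  (forall (gT : finGroupType) (W : {group gT}) (n : nat)
          (rG : mx_representation R[i] W n),
     mx_irreducible rG ->
     (forall v : 'rV[R[i]]_n, v != 0 ->
        forall v' : 'rV[R[i]]_n, v' \in rorbit rG v ->
          ~~ spans_all [seq w <- rorbit rG v | w \notin [:: v; v']] ->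
          leq (size (rorbit rG v)) (muln 2 n))).
Proof.
split=> gT W n rG irr v v0 v' _.
  exact: (@final _ gT W n rG irr v v0 v').
exact: (@final _ gT W n rG irr v v0 v').
Qed.
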